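(* Let $n,l,k$ be positive integers, let $\mu$ be an order-$(l+k)$ equivalence class and $\epsilon>0$. Fix $(\mathbf{i}^1,\mathbf{j}^1)\in\mu$ with $\mathbf{i}^1\in[n]^l$, $\mathbf{j}^1\in[n]^k$, and let $\gamma^l,\gamma^k$ be the equivalence classes of $\mathbf{i}^1$ and $\mathbf{j}^1$. For $a\in[l],b\in[k]$ let $\mathrm{sgn}(a,b)=+1$ if $\mathbf{i}^2_a=\mathbf{j}^2_b$ for all $(\mathbf{i}^2,\mathbf{j}^2)\in\mu$, and $\mathrm{sgn}(a,b)=-1$ if $\mathbf{i}^2_a\neq\mathbf{j}^2_b$ for all $(\mathbf{i}^2,\mathbf{j}^2)\in\mu$. Define, for $\mathbf{i}\in[n]^l,\mathbf{j}\in[n]^k$, $$\delta(\mathbf{i},\mathbf{j};\mu,\epsilon)=\mathbb{1}_{\mathbf{i}\in\gamma^l}+(1-\epsilon)\mathbb{1}_{\mathbf{i}\notin\gamma^l}+\mathbb{1}_{\mathbf{j}\in\gamma^k}+(1-\epsilon)\mathbb{1}_{\mathbf{j}\notin\gamma^k}+\sum_{a\in[l]}\sum_{b\in[k]}\mathrm{sgn}(a,b)\mathbb{1}_{\mathbf{i}_a=\mathbf{j}_b}.$$ Then for any $\mathbf{i}\in[n]^l$ and $\mathbf{j}\in[n]^k$, $(\mathbf{i},\mathbf{j})\in\mu$ if and only if $\delta(\mathbf{i},\mathbf{j};\mu,\epsilon)$ equals the maximum of $\delta(\cdot,\cdot;\mu,\epsilon)$ over $[n]^l\times[n]^k$.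
   Context: For $m\ge1$, the equivalence relation $\sim$ on $[n]^m$ relates $\mathbf{i}\sim\mathbf{j}$ iff $(i_1,\dots,i_m)=(\pi(j_1),\dots,\pi(j_m))$ for some $\pi\in S_n$; an order-$m$ equivalence class is an element of $[n]^m/_\sim$. All elements of one class share the same equality pattern among their entries, so $\mathrm{sgn}(a,b)$ is well defined. $(\mathbf{i},\mathbf{j})$ denotes concatenation of multi-indices. *)

(* Defs.v *)
From mathcomp Require Import all_boot all_order all_algebra all_fingroup.
Set Implicit Arguments. Unset Strict Implicit. Unset Printing Implicit Defensive.
Import Order.TTheory GRing.Theory Num.Theory.
Local Open Scope ring_scope.

Definition midx (n m : nat) := {ffun 'I_m -> 'I_n}.

Definition midx_equiv (n m : nat) (i j : midx n m) : bool :=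
  [exists s : {perm 'I_n}, [forall t, i t == s (j t)]].

Definition eqclass (n m : nat) (i : midx n m) : {set midx n m} :=
  [set j | midx_equiv j i].

Definition is_eqclass (n m : nat) (mu : {set midx n m}) : Prop :=
  exists i : midx n m, mu = eqclass i.

Definition concat (n l k : nat) (i : midx n l) (j : midx n k) : midx n (l + k) :=
  [ffun t : 'I_(l + k) => match split t with inl a => i a | inr b => j b end].

(* sgn(a,b): +1 if i_a = j_b for all (i,j) in mu, -1 if i_a <> j_b for all
   (i,j) in mu (0 otherwise; never happens for an equivalence class) *)
Definition sgn (R : numDomainType) (n l k : nat) (mu : {set midx n (l + k)})
  (a : 'I_l) (b : 'I_k) : R :=
  if [forall x in mu, x (lshift k a) == x (rshift l b)] then 1
  else if [forall x in mu, x (lshift k a) != x (rshift l b)] then -1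
  else 0.

(* delta(i, j; mu, eps), where gl, gk are the classes of i^1, j^1 *)
Definition delta (R : numDomainType) (n l k : nat) (mu : {set midx n (l + k)})
  (gl : {set midx n l}) (gk : {set midx n k}) (eps : R)
  (i : midx n l) (j : midx n k) : R :=
  (if i \in gl then 1 else 1 - eps) + (if j \in gk then 1 else 1 - eps)
  + \sum_(a < l) \sum_(b < k) sgn R mu a b * (i a == j b)%:R.

(* Main.v *)
Require Import Defs.
From mathcomp Require Import all_boot all_order all_algebra all_fingroup.
Import Order.TTheory GRing.Theory Num.Theory.
From mathcomp Require Import lra.
Local Open Scope ring_scope.
Set Implicit Arguments. Unset Strict Implicit.

Lemma equiv_refl n m (x : midx n m) : midx_equiv x x.
Proof. apply/existsP; exists 1%g; apply/forallP=> t; by rewrite perm1. Qed.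

Lemma equiv_sym n m (x y : midx n m) : midx_equiv x y -> midx_equiv y x.
Proof.
case/existsP=> s /forallP H; apply/existsP; exists s^-1%g; apply/forallP=> t.
by rewrite (eqP (H t)) permK.
Qed.

Lemma equiv_trans n m (x y z : midx n m) :
  midx_equiv x y -> midx_equiv y z -> midx_equiv x z.
Proof.
case/existsP=> s /forallP Hs; case/existsP=> r /forallP Hr.
apply/existsP; exists (r * s)%g; apply/forallP=> t.
by rewrite permM -(eqP (Hr t)) (eqP (Hs t)).
Qed.

Lemma equiv_pat n m (x y : midx n m) : midx_equiv x y ->
  forall s t, (x s == x t) = (y s == y t).
Proof.
case/existsP=> p /forallP H s t.
by rewrite (eqP (H s)) (eqP (H t)) (inj_eq perm_inj).
Qed.

Lemma pat_equiv n m (x y : midx n m) :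
  (forall s t, (x s == x t) = (y s == y t)) -> midx_equiv x y.
Proof.
move=> H.
pose D := [set y t | t : 'I_m]. pose E := [set x t | t : 'I_m].
have yD t : y t \in D by apply: imset_f.
pose g0 v := if [pick t | y t == v] is Some t then x t else v.
have g0y t : g0 (y t) = x t.
  rewrite /g0; case: pickP => [t' /eqP e|/(_ t)]; last by rewrite eqxx.
  by apply/eqP; rewrite H e.
have injD : {in D &, injective g0}.
  move=> u v /imsetP[s _ ->] /imsetP[t _ ->]; rewrite !g0y => e.
  by apply/eqP; rewrite -H e.
have ED : E = g0 @: D.
  apply/setP=> v; apply/imsetP/imsetP => [[t _ ->]|[u /imsetP[t _ ->] ->]].
    by exists (y t); rewrite ?g0y.
  by exists t; rewrite ?g0y.
have cD : #|~: D| = #|~: E|.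
  have : (#|D| + #|~: D| = #|E| + #|~: E|)%N by rewrite !cardsC.
  by rewrite ED card_in_imset // => /addnI.
have sz : size (enum (~: E)) = size (enum (~: D)) by rewrite -!cardE cD.
pose g v := if v \in D then g0 v else nth v (enum (~: E)) (index v (enum (~: D))).
have ix v : v \notin D -> (index v (enum (~: D)) < size (enum (~: E)))%N.
  by move=> vD; rewrite sz index_mem mem_enum inE vD.
have gC v : v \notin D -> g v \in ~: E.
  move=> vD; rewrite /g (negbTE vD) /=; have := mem_nth v (ix v vD); by rewrite mem_enum.
have gD v : v \in D -> g v \in E.
  by move=> vD; rewrite /g vD ED imset_f.
have ginj : injective g.
  move=> u v; case uD: (u \in D); case vD: (v \in D).
  - by rewrite /g uD vD; apply: injD.
  - move=> e; have := gC v (negbT vD); by rewrite -e inE gD.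
  - move=> e; have := gC u (negbT uD); by rewrite e inE gD.
  - move=> e.
    have iu := ix u (negbT uD); have iv := ix v (negbT vD).
    move: e; rewrite /g uD vD (set_nth_default u v iv).
    move/eqP; rewrite nth_uniq ?enum_uniq // => /eqP ei.
    have um : u \in enum (~: D) by rewrite mem_enum inE uD.
    have vm : v \in enum (~: D) by rewrite mem_enum inE vD.
    by rewrite -(nth_index u um) ei (set_nth_default v u) ?nth_index // index_mem.
apply/existsP; exists (perm ginj); apply/forallP=> t.
by rewrite permE /g yD g0y.
Qed.

Lemma concatL n l k (i : midx n l) (j : midx n k) a : concat i j (lshift k a) = i a.
Proof. by rewrite ffunE (unsplitK (inl _ : 'I_l + 'I_k)). Qed.
Lemma concatR n l k (i : midx n l) (j : midx n k) b : concat i j (rshift l b) = j b.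
Proof. by rewrite ffunE (unsplitK (inr _ : 'I_l + 'I_k)). Qed.

Lemma concat_pat n l k (i i' : midx n l) (j j' : midx n k) :
  (forall a a', (i a == i a') = (i' a == i' a')) ->
  (forall b b', (j b == j b') = (j' b == j' b')) ->
  (forall a b, (i a == j b) = (i' a == j' b)) ->
  forall s t, (concat i j s == concat i j t) = (concat i' j' s == concat i' j' t).
Proof.
move=> Hi Hj Hc s t; rewrite !ffunE.
case: (split s) => a; case: (split t) => b //; by rewrite ?Hc // eq_sym Hc eq_sym.
Qed.

Unset Implicit Arguments. Set Strict Implicit.
Theorem mainTheorem6 (R : realFieldType) (n l k : nat)
  (mu : {set midx n (l + k)}) (eps : R)
  (i1 : midx n l) (j1 : midx n k) :
  (0 < n)%N -> (0 < l)%N -> (0 < k)%N ->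
  is_eqclass mu -> 0 < eps ->
  concat i1 j1 \in mu ->
  forall (i : midx n l) (j : midx n k),
    concat i j \in mu <->
    (forall (i' : midx n l) (j' : midx n k),
        delta mu (eqclass i1) (eqclass j1) eps i' j'
        <= delta mu (eqclass i1) (eqclass j1) eps i j).
Proof.
move=> _ _ _ [x0 ->] eps0 x1m.
set x1 := concat i1 j1 in x1m *.
have Hmu x : (x \in eqclass x0) = midx_equiv x x1.
  move: x1m; rewrite /eqclass !inE => x10; apply/idP/idP => h.
    exact: equiv_trans h (equiv_sym x10).
  exact: equiv_trans h x10.
have Hsgn a b : sgn R (eqclass x0) a b = if i1 a == j1 b then 1 else -1.
  have key x : x \in eqclass x0 ->
      (x (lshift k a) == x (rshift l b)) = (i1 a == j1 b).
    by rewrite Hmu => /equiv_pat ->; rewrite /x1 concatL concatR.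
  rewrite /sgn; case: (boolP (i1 a == j1 b)) => e.
    by rewrite ifT //; apply/forall_inP => x xm; rewrite key.
  rewrite ifF; last first.
    apply/negP => /forall_inP /(_ _ x1m); rewrite key; exact/negP.
  by rewrite ifT //; apply/forall_inP => x xm; rewrite key.
pose c a b : R := (i1 a == j1 b)%:R.
pose P := \sum_(a < l) \sum_(b < k) c a b.
pose S (i : midx n l) (j : midx n k) :=
  \sum_(a < l) \sum_(b < k) sgn R (eqclass x0) a b * (i a == j b)%:R.
have tle (i : midx n l) (j : midx n k) a b :
    sgn R (eqclass x0) a b * (i a == j b)%:R <= c a b.
  by rewrite Hsgn /c; case: (i1 a == j1 b); case: (i a == j b); rewrite /= ?mul1r ?mulr1 ?mulr0 ?lerN10.
have Sle i j : S i j <= P.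
  by apply: ler_sum => a _; apply: ler_sum => b _; apply: tle.
have Seq (i : midx n l) (j : midx n k) : S i j = P -> forall a b, (i a == j b) = (i1 a == j1 b).
  move=> E.
  have H0 : \sum_(a < l) (\sum_(b < k) c a b - \sum_(b < k) sgn R (eqclass x0) a b * (i a == j b)%:R) = 0.
    by rewrite sumrB -/P -/(S i j) E subrr.
  move=> a b.
  have nn1 : forall a' : 'I_l, true -> 0 <= \sum_(b < k) c a' b - \sum_(b < k) sgn R (eqclass x0) a' b * (i a' == j b)%:R.
    by move=> a' _; rewrite -sumrB sumr_ge0 // => b' _; rewrite subr_ge0 tle.
  have := @psumr_eq0P _ _ _ _ nn1 H0 a isT.
  rewrite -sumrB => H1.
  have nn2 : forall b' : 'I_k, true -> 0 <= c a b' - sgn R (eqclass x0) a b' * (i a == j b')%:R.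
    by move=> b' _; rewrite subr_ge0 tle.
  have := @psumr_eq0P _ _ _ _ nn2 H1 b isT.
  move=> /eqP; rewrite /c Hsgn; case: (i1 a == j1 b); case: (i a == j b);
      rewrite /= ?mul1r ?mulr1 ?mulr0 ?subrr ?subr0 ?sub0r ?opprK ?oppr_eq0 ?oner_eq0 //.
have Ale (b : bool) : (if b then 1 else 1 - eps) <= 1 :> R by case: b => //; lra.
have dle i' j' : delta (eqclass x0) (eqclass i1) (eqclass j1) eps i' j' <= 2 + P.
  apply: le_trans (lerD (lerD (Ale _) (Ale _)) (Sle i' j')) _.
  by lra.
have Smax (i : midx n l) (j : midx n k) : (forall a b, (i a == j b) = (i1 a == j1 b)) -> S i j = P.
  move=> H; apply: eq_bigr => a _; apply: eq_bigr => b _.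
  by rewrite H Hsgn /c; case: (i1 a == j1 b); rewrite ?mul1r ?mulr0.
move=> i j; split.
  rewrite Hmu => /equiv_pat H i' j'.
  have Hi : i \in eqclass i1.
    rewrite inE; apply: pat_equiv => a a'; have := H (lshift k a) (lshift k a').
    by rewrite /x1 !concatL.
  have Hj : j \in eqclass j1.
    rewrite inE; apply: pat_equiv => a a'; have := H (rshift l a) (rshift l a').
    by rewrite /x1 !concatR.
  have -> : delta (eqclass x0) (eqclass i1) (eqclass j1) eps i j = 2 + P.
    rewrite /delta Hi Hj -/(S i j) Smax //.
    by move=> a b; have := H (lshift k a) (rshift l b); rewrite /x1 concatL concatR !concatL concatR.
  exact: dle.
move=> /(_ i1 j1).
have -> : delta (eqclass x0) (eqclass i1) (eqclass j1) eps i1 j1 = 2 + P.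
  by rewrite /delta !inE !equiv_refl -/(S i1 j1) Smax //; lra.
rewrite /delta -/(S i j) => H.
have HS := Sle i j.
have A1 := Ale (i \in eqclass i1); have B1 := Ale (j \in eqclass j1).
have Hi : i \in eqclass i1.
  apply/negPn/negP => ni; rewrite (negbTE ni) in H.
  have L (s p bb : R) : 2 + p <= 1 - eps + bb + s -> s <= p -> bb <= 1 -> False by lra.
  exact: L H HS B1.
have Hj : j \in eqclass j1.
  apply/negPn/negP => ni; rewrite (negbTE ni) Hi in H.
  have L (s p : R) : 2 + p <= 1 + (1 - eps) + s -> s <= p -> False by lra.
  exact: L H HS.
rewrite Hi Hj in H.
have L (s p : R) : 2 + p <= 1 + 1 + s -> s <= p -> s = p by lra.
have SP : S i j = P by exact: L H HS.
have Hc := Seq i j SP.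
rewrite Hmu; apply: pat_equiv; apply: concat_pat => //.
  by apply: equiv_pat; move: Hi; rewrite inE.
by apply: equiv_pat; move: Hj; rewrite inE.
Qed.
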